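(* FT satisfies clone-proximity: for every finite candidate set $C$, every profile $P$ over $C$ in which $a,a'\in C$ are clones, every axis $\triangleleft\in\mathrm{FT}(P)$, every candidate $x$ with $a\triangleleft x\triangleleft a'$ or $a'\triangleleft x\triangleleft a$, and every ballot $A\in P$ with $a,a'\in A$, we have $x\in A$. For each $f\in\{\mathrm{VD},\mathrm{MF},\mathrm{BC},\mathrm{MS}\}$ clone-proximity fails: there exist $C$, a profile $P$ with clones $a,a'$, an axis $\triangleleft\in f(P)$, a candidate $x$ strictly between $a$ and $a'$ on $\triangleleft$, and a ballot $A\in P$ with $a,a'\in A$ and $x\notin A$.
   Context: Let $C$ be a finite set of candidates. An approval ballot is a nonempty subset $A\subseteq C$; a profile is a finite sequence of ballots. Two candidates $a,a'$ are clones in $P$ if for every ballot $A\in P$, $a\in A$ iff $a'\in A$. An axis is a strict linear order $\triangleleft$ on $C$; $a\trianglelefteq b$ means $a\triangleleft b$ or $a=b$. A ballot $A$ is an interval of $\triangleleft$ if for all $a,b\in A$ and every $c$ with $a\triangleleft c\triangleleft b$ we have $c\in A$. For a cost function $\mathrm{cost}_f$, the scoring rule returns $f(P)=\arg\min_{\triangleleft}\sum_{A\in P}\mathrm{cost}_f(A,\triangleleft)$ over all axes on $C$. The five rules are the scoring rules with costs: $\mathrm{cost}_{\mathrm{VD}}(A,\triangleleft)=0$ if $A$ is an interval of $\triangleleft$ and $1$ otherwise; $\mathrm{cost}_{\mathrm{MF}}(A,\triangleleft)=\min_{x,y\in A,\ x\trianglelefteq y}\big(|\{z\in A: z\triangleleft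 x \text{ or } y\triangleleft z\}|+|\{z\notin A: x\triangleleft z\triangleleft y\}|\big)$; $\mathrm{cost}_{\mathrm{BC}}(A,\triangleleft)=|\{b\notin A: a\triangleleft b\triangleleft c \text{ for some } a,c\in A\}|$; $\mathrm{cost}_{\mathrm{MS}}(A,\triangleleft)=\sum_{x\in C\setminus A}\min\big(|\{y\in A:y\triangleleft x\}|,\,|\{y\in A:x\triangleleft y\}|\big)$; $\mathrm{cost}_{\mathrm{FT}}(A,\triangleleft)=\sum_{x\in C\setminus A}|\{y\in A:y\triangleleft x\}|\cdot|\{y\in A:x\triangleleft y\}|$. *)

(* Defs.v *)
From mathcomp Require Import all_boot.
Set Implicit Arguments. Unset Strict Implicit. Unset Printing Implicit Defensive.

Section Axes.
Variable C : finType.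

(* An axis is a strict linear order on C, given as a boolean relation
   [lt] with [lt a b] meaning  a ◁ b. *)
Definition is_axis (lt : rel C) : bool :=
  [&& [forall x, ~~ lt x x],
      [forall x, forall y, forall z, lt x y ==> lt y z ==> lt x z] &
      [forall x, forall y, (x != y) ==> (lt x y || lt y x)]].

Definition le_ax (lt : rel C) (a b : C) : bool := (a == b) || lt a b.

Definition is_interval (lt : rel C) (A : {set C}) : bool :=
  [forall a, forall b, forall c,
     (a \in A) ==> (b \in A) ==> lt a c ==> lt c b ==> (c \in A)].

Definition cost := {set C} -> rel C -> nat.

Definition cost_VD : cost := fun A lt => if is_interval lt A then 0 else 1.

(* minimum over pairs x ⊴ y in A; the default #|C| is never smaller than the
   true minimum for nonempty A (the pair x = y gives #|A| - 1 < #|C|). *)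
Definition cost_MF : cost := fun A lt =>
  \big[minn/#|C|]_(p : C * C | [&& p.1 \in A, p.2 \in A & le_ax lt p.1 p.2])
     (#|[set z in A | lt z p.1 || lt p.2 z]|
      + #|[set z in ~: A | lt p.1 z && lt z p.2]|).

Definition cost_BC : cost := fun A lt =>
  #|[set b in ~: A | [exists a in A, exists c in A, lt a b && lt b c]]|.

Definition cost_MS : cost := fun A lt =>
  \sum_(x in ~: A) minn #|[set y in A | lt y x]| #|[set y in A | lt x y]|.

Definition cost_FT : cost := fun A lt =>
  \sum_(x in ~: A) #|[set y in A | lt y x]| * #|[set y in A | lt x y]|.

Definition total_cost (f : cost) (P : seq {set C}) (lt : rel C) : nat :=
  \sum_(A <- P) f A lt.

Definition in_rule (f : cost) (P : seq {set C}) (lt : rel C) : Prop :=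
  is_axis lt /\
  forall lt' : rel C, is_axis lt' -> total_cost f P lt <= total_cost f P lt'.

Definition is_profile (P : seq {set C}) : bool := all (fun A : {set C} => A != set0) P.

Definition clones (P : seq {set C}) (a a' : C) : bool :=
  all (fun A : {set C} => (a \in A) == (a' \in A)) P.

Definition strictly_between (lt : rel C) (a a' x : C) : bool :=
  (lt a x && lt x a') || (lt a' x && lt x a).

End Axes.

(* Main.v *)
Require Import Defs.
From HB Require Import structures.
From mathcomp Require Import all_boot zify.
From Stdlib Require Import FunctionalExtensionality.
Set Implicit Arguments. Unset Strict Implicit. Unset Printing Implicit Defensive.

Section Ax.
Variable C : finType.
Variable lt : rel C.
Hypothesis ax : is_axis lt.

Lemma ax_irr x : lt x x = false.
Proof. by case/and3P: ax => /forallP/(_ x)/negbTE. Qed.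
Lemma ax_trans x y z : lt x y -> lt y z -> lt x z.
Proof. by case/and3P: ax => _ /forallP/(_ x)/forallP/(_ y)/forallP/(_ z)/implyP H _ /H/implyP. Qed.
Lemma ax_tot x y : x != y -> lt x y || lt y x.
Proof. by case/and3P: ax => _ _ /forallP/(_ x)/forallP/(_ y)/implyP. Qed.
Lemma ax_asym x y : lt x y -> lt y x = false.
Proof. by move=> h; apply/negbTE/negP => /(ax_trans h); rewrite ax_irr. Qed.
Lemma ax_nlt x y : x != y -> ~~ lt x y = lt y x.
Proof.
move=> ne; case h: (lt x y) => /=; first by rewrite ax_asym.
by move: (ax_tot ne); rewrite h.
Qed.
End Ax.

Definition ins (C : finType) (lt : rel C) (m : C) (S : pred C) : rel C :=
  fun u v => if u == m then (v != m) && ~~ S v else if v == m then S u else lt u v.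

Lemma ins_axis (C : finType) (lt : rel C) m (S : pred C) :
  is_axis lt -> (forall u w, u != m -> w != m -> lt u w -> S w -> S u) ->
  is_axis (ins lt m S).
Proof.
move=> ax dc; apply/and3P; split.
- apply/forallP => x; rewrite /ins; case: (eqVneq x m) => [->|xm] /=; rewrite ?eqxx //.
  by rewrite (ax_irr ax).
- apply/forallP => x; apply/forallP => y; apply/forallP => z; apply/implyP => h1; apply/implyP.
  move: h1; rewrite /ins.
  case: (eqVneq x m) => [xm|xm]; case: (eqVneq y m) => [ym|ym];
    case: (eqVneq z m) => [zm|zm] => //=; rewrite ?xm ?ym ?zm ?eqxx //=.
  + by move=> /negP.
  + move=> Sy lyz; apply/negP => Sz; move/negP: Sy; apply; exact: (dc y z).
  + move=> Sx /negP Sz; have xz: x != z by apply/eqP => exz; apply: Sz; rewrite -exz.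
    case/orP: (ax_tot ax xz) => // lzx; case: Sz; exact: (dc z x).
  + by move=> lxy Sy; exact: (dc x y).
  + exact: ax_trans.
- apply/forallP => x; apply/forallP => y; apply/implyP => xy; rewrite /ins.
  case: (eqVneq x m) => [xm|xm]; case: (eqVneq y m) => [ym|ym] => //=; rewrite ?xm ?ym ?eqxx //=.
  + by move: xy; rewrite xm ym eqxx.
  + by case: (S y).
  + by case: (S x).
  + exact: ax_tot.
Qed.

Definition gFT (C : finType) (lt : rel C) (B : {set C}) (x : C) :=
  #|[set y in B | lt y x]| * #|[set y in B | lt x y]|.

Definition sw (C : finType) (a a' x : C) := if x == a then a' else if x == a' then a else x.

Lemma card_change (C : finType) (B : {set C}) m (p q : pred C) :
  m \in B -> (forall y, y != m -> p y = q y) ->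
  #|[set y in B | p y]| + q m = #|[set y in B | q y]| + p m.
Proof.
move=> mB h; rewrite (cardsD1 m [set y in B | p y]) (cardsD1 m [set y in B | q y]) !inE mB /=.
have -> : [set y in B | p y] :\ m = [set y in B | q y] :\ m.
  apply/setP => y; rewrite !inE; case: (eqVneq y m) => //= ym; by rewrite h.
lia.
Qed.

Lemma card_eqB (C : finType) (B : {set C}) (p q : pred C) :
  (forall y, y \in B -> p y = q y) -> #|[set y in B | p y]| = #|[set y in B | q y]|.
Proof. by move=> h; apply: eq_card => y; rewrite !inE; case yB: (y \in B) => //=; rewrite h. Qed.

Lemma gFT_eq (C : finType) (lt lt' : rel C) (B : {set C}) x z :
  (forall y, y \in B -> lt' y x = lt y z) -> (forall y, y \in B -> lt' x y = lt z y) ->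
  gFT lt' B x = gFT lt B z.
Proof. by move=> h1 h2; rewrite /gFT (card_eqB h1) (card_eqB h2). Qed.

Lemma arA (L0 L1 L2 R0 R1 R2 : nat) : L1 + 0 = L0 + 0 -> R1 + 1 = R0 + 1 ->
 L2 + 0 = L0 + 0 -> R2 + 1 = R0 + 1 -> L1 * R1 + L2 * R2 + 2 * 0 = L0 * R0 + L0 * R0.
Proof. move=> E1 E2 E3 E4; have -> : L1 = L0 by lia.
have -> : L2 = L0 by lia. have -> : R1 = R0 by lia. have -> : R2 = R0 by lia. lia. Qed.
Lemma arC (L0 L1 L2 R0 R1 R2 : nat) : L1 + 1 = L0 + 1 -> R1 + 0 = R0 + 0 ->
 L2 + 1 = L0 + 1 -> R2 + 0 = R0 + 0 -> L1 * R1 + L2 * R2 + 2 * 0 = L0 * R0 + L0 * R0.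
Proof. move=> E1 E2 E3 E4; have -> : L1 = L0 by lia.
have -> : L2 = L0 by lia. have -> : R1 = R0 by lia. have -> : R2 = R0 by lia. lia. Qed.
Lemma arB (L0 L1 L2 R0 R1 R2 : nat) : L1 + 0 = L0 + 1 -> R1 + 1 = R0 + 0 ->
 L2 + 1 = L0 + 0 -> R2 + 0 = R0 + 1 -> L1 * R1 + L2 * R2 + 2 * 1 = L0 * R0 + L0 * R0.
Proof.
  move=> E1 E2 E3 E4; have -> : L1 = L2 + 2 by lia. have -> : R2 = R1 + 2 by lia.
    have -> : L0 = L2 + 1 by lia. have -> : R0 = R1 + 1 by lia.
    rewrite !mulnDl !mulnDr; lia.
Qed.

Section Main.
Variable C : finType.
Variable lt : rel C.
Hypothesis ax : is_axis lt.
Variables a a' : C.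
Hypothesis lta : lt a a'.

Let aa' : a != a'.
Proof. by apply/eqP => e; move: lta; rewrite e (ax_irr ax). Qed.

Definition lt1 := ins lt a' (fun u => le_ax lt u a).
Definition lt2 := ins lt a (fun u => lt u a').

Lemma lt1_axis : is_axis lt1.
Proof.
apply: ins_axis => // u w um wm luw; rewrite /le_ax => /orP[/eqP e|lwa]; apply/orP; right.
  by rewrite -e. exact: ax_trans luw lwa.
Qed.

Lemma lt2_axis : is_axis lt2.
Proof. apply: ins_axis => // u w um wm luw lwa; exact: ax_trans luw lwa. Qed.

Lemma point (B : {set C}) x : (a \in B) = (a' \in B) -> x \notin B ->
  gFT lt1 B x + gFT lt2 B x + 2 * ((a \in B) && (lt a x && lt x a')) =
  gFT lt B x + gFT lt B (sw a a' x).
Proof.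
move=> hB xB; have a'a : a' != a by rewrite eq_sym.
case aB: (a \in B).
- have a'B : a' \in B by rewrite -hB.
  have xa : x != a by apply: contraNneq xB => ->.
  have xa' : x != a' by apply: contraNneq xB => ->.
  rewrite /sw (negbTE xa) (negbTE xa') /gFT /=.
  have h1 : ~~ lt x a = lt a x by apply: ax_nlt.
  have h2 : ~~ lt x a' = lt a' x by apply: ax_nlt.
  have h3 : lt x a -> lt x a' by move=> h; apply: ax_trans h lta.
  have e1 : #|[set y in B | lt1 y x]| + lt a' x = #|[set y in B | lt y x]| + lt a x.
    have l : lt1 a' x = lt a x by rewrite /lt1 /ins eqxx xa' /le_ax (negbTE xa) /= h1.
    rewrite -l.
    apply: (@card_change _ B a' (fun y => lt1 y x) (fun y => lt y x) a'B).
    by move=> y ya; rewrite /lt1 /ins (negbTE ya) (negbTE xa').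
  have e2 : #|[set y in B | lt1 x y]| + lt x a' = #|[set y in B | lt x y]| + lt x a.
    have l : lt1 x a' = lt x a by rewrite /lt1 /ins eqxx (negbTE xa') /le_ax (negbTE xa).
    rewrite -l.
    apply: (@card_change _ B a' (fun y => lt1 x y) (fun y => lt x y) a'B).
    by move=> y ya; rewrite /lt1 /ins (negbTE ya) (negbTE xa').
  have e3 : #|[set y in B | lt2 y x]| + lt a x = #|[set y in B | lt y x]| + lt a' x.
    have l : lt2 a x = lt a' x by rewrite /lt2 /ins eqxx xa /= h2.
    rewrite -l.
    apply: (@card_change _ B a (fun y => lt2 y x) (fun y => lt y x) aB).
    by move=> y ya; rewrite /lt2 /ins (negbTE ya) (negbTE xa).
  have e4 : #|[set y in B | lt2 x y]| + lt x a = #|[set y in B | lt x y]| + lt x a'.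
    have l : lt2 x a = lt x a' by rewrite /lt2 /ins eqxx (negbTE xa).
    rewrite -l.
    apply: (@card_change _ B a (fun y => lt2 x y) (fun y => lt x y) aB).
    by move=> y ya; rewrite /lt2 /ins (negbTE ya) (negbTE xa).
  move: e1 e2 e3 e4.
  set L1 := #|[set y in B | lt1 y x]|. set R1 := #|[set y in B | lt1 x y]|.
  set L2 := #|[set y in B | lt2 y x]|. set R2 := #|[set y in B | lt2 x y]|.
  set L0 := #|[set y in B | lt y x]|. set R0 := #|[set y in B | lt x y]|.
  clearbody L1 R1 L2 R2 L0 R0; rewrite -h1 -h2 /=.
  case: (lt x a) h3 => [/(_ isT) ->|_] /=; case: (lt x a') => /=.
  + exact: arA.
  + exact: arA.
  + exact: arB.
  + exact: arC.
- have a'B : a' \notin B by rewrite -hB aB.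
  have yB : forall y, y \in B -> (y != a) && (y != a').
    by move=> y yB; apply/andP; split; apply: contraTneq yB => ->; rewrite ?aB.
  rewrite /= muln0 addn0 /sw.
  case: (eqVneq x a) => [xa|xa].
    rewrite xa (@gFT_eq _ lt lt1 B a a) ?(@gFT_eq _ lt lt2 B a a') //.
    + by move=> y /yB /andP[ya ya']; rewrite /lt2 /ins (negbTE ya) eqxx.
    + by move=> y /yB /andP[ya ya']; rewrite /lt2 /ins eqxx ya /= (ax_nlt ax ya').
    + by move=> y /yB /andP[ya ya']; rewrite /lt1 /ins (negbTE ya') (negbTE aa').
    + by move=> y /yB /andP[ya ya']; rewrite /lt1 /ins (negbTE ya') (negbTE aa').
  case: (eqVneq x a') => [xa'|xa'].
    rewrite xa' (@gFT_eq _ lt lt1 B a' a) ?(@gFT_eq _ lt lt2 B a' a') 1?addnC //.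
    + by move=> y /yB /andP[ya ya']; rewrite /lt2 /ins (negbTE ya) (negbTE a'a).
    + by move=> y /yB /andP[ya ya']; rewrite /lt2 /ins (negbTE ya) (negbTE a'a).
    + by move=> y /yB /andP[ya ya']; rewrite /lt1 /ins (negbTE ya') eqxx /le_ax (negbTE ya).
    + by move=> y /yB /andP[ya ya']; rewrite /lt1 /ins eqxx ya' /le_ax (negbTE ya) /= (ax_nlt ax ya).
  rewrite ?(negbTE xa') (@gFT_eq _ lt lt1 B x x) ?(@gFT_eq _ lt lt2 B x x) //.
  + by move=> y /yB /andP[ya ya']; rewrite /lt2 /ins (negbTE ya) (negbTE xa).
  + by move=> y /yB /andP[ya ya']; rewrite /lt2 /ins (negbTE ya) (negbTE xa).
  + by move=> y /yB /andP[ya ya']; rewrite /lt1 /ins (negbTE ya') (negbTE xa').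
  + by move=> y /yB /andP[ya ya']; rewrite /lt1 /ins (negbTE ya') (negbTE xa').
Qed.

Lemma swK : involutive (sw a a').
Proof.
move=> x; rewrite /sw; case: (eqVneq x a) => [->|xa].
  by rewrite ?eqxx eq_sym (negbTE aa') ?eqxx.
case: (eqVneq x a') => [->|xa']; first by rewrite eqxx.
by rewrite (negbTE xa) (negbTE xa').
Qed.

Definition eB (B : {set C}) := \sum_(x in ~: B) ((a \in B) && (lt a x && lt x a')).

Lemma ballot (B : {set C}) : (a \in B) = (a' \in B) ->
  cost_FT B lt1 + cost_FT B lt2 + 2 * eB B = 2 * cost_FT B lt.
Proof.
move=> hB.
have E1 : forall r, cost_FT B r = \sum_(x in ~: B) gFT r B x by [].
rewrite !E1 /eB big_distrr -!big_split /=.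
rewrite (eq_bigr (fun x => gFT lt B x + gFT lt B (sw a a' x))); last first.
  by move=> x; rewrite inE => xB; apply: point.
rewrite big_split /= mul2n -addnn; congr (_ + _).
rewrite [RHS](reindex_inj (can_inj swK)) /=; apply: eq_bigl => j.
rewrite !inE /sw; case: (eqVneq j a) => [->|ja]; first by rewrite hB.
by case: (eqVneq j a') => [->|ja'] //; rewrite hB.
Qed.

Lemma total (P : seq {set C}) : clones P a a' ->
  total_cost (@cost_FT C) P lt1 + total_cost (@cost_FT C) P lt2 + 2 * \sum_(B <- P) eB B
  = 2 * total_cost (@cost_FT C) P lt.
Proof.
move=> cl; rewrite /total_cost !big_distrr -!big_split /=.
apply: eq_big_seq => B BP; apply: ballot.
by move/allP: cl => /(_ B BP) /eqP.
Qed.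
End Main.

Lemma ar_fin t t1 t2 E : t1 + t2 + 2 * E = 2 * t -> t <= t1 -> t <= t2 -> E = 0.
Proof. lia. Qed.

Lemma part1 (C : finType) (P : seq {set C}) (a a' : C) lt x A :
  clones P a a' -> in_rule (@cost_FT C) P lt -> lt a x -> lt x a' ->
  A \in P -> a \in A -> x \in A.
Proof.
move=> cl [ax opt] lax lxa' AP aA; apply/negPn/negP => xA.
have lta : lt a a' := ax_trans ax lax lxa'.
have T := total ax lta cl.
have o1 := opt _ (@lt1_axis _ _ ax a a'); have o2 := opt _ (@lt2_axis _ _ ax a a').
have /eqP := ar_fin T o1 o2; rewrite sum_nat_seq_eq0 => /allP /(_ A AP) /=.
rewrite /eB sum_nat_eq0 => /forallP /(_ x); rewrite inE xA aA lax lxa'.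
by [].
Qed.

HB.instance Definition _ := SemiGroup.isComLaw.Build nat minn minnA minnC.

Definition ltN (s : seq nat) (i j : nat) := nth 0 s i < nth 0 s j.
Definition sb n (b : seq nat) : {set 'I_n} := [set y : 'I_n | nat_of_ord y \in b].
Definition lts n (s : seq nat) : rel 'I_n := fun u v => ltN s u v.
Arguments lts : clear implicits.
Arguments sb : clear implicits.

Lemma card_ordP n (p : pred nat) : #|[set y : 'I_n | p y]| = \sum_(0 <= i < n | p i) 1.
Proof. by rewrite -sum1_card big_mkord; apply: eq_bigl => i; rewrite inE. Qed.

Lemma nth_enum_map n (f : 'I_n -> nat) (u : 'I_n) : nth 0 [seq f x | x <- enum 'I_n] u = f u.
Proof. by rewrite (nth_map u) ?size_enum_ord // nth_ord_enum. Qed.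

Lemma lts_axis n s : perm_eq s (iota 0 n) -> is_axis (lts n s).
Proof.
move=> ps; have us : uniq s by rewrite (perm_uniq ps) iota_uniq.
have ss : size s = n by rewrite (perm_size ps) size_iota.
apply/and3P; split.
- by apply/forallP => x; rewrite /lts /ltN ltnn.
- apply/forallP => x; apply/forallP => y; apply/forallP => z; apply/implyP => h1; apply/implyP.
  exact: ltn_trans h1.
- apply/forallP => x; apply/forallP => y; apply/implyP => xy.
  rewrite /lts /ltN -neq_ltn nth_uniq ?ss ?ltn_ord //.
Qed.

Lemma axis_lts n (lt : rel 'I_n) : is_axis lt -> exists s, perm_eq s (iota 0 n) /\ lt = lts n s.
Proof.
move=> ax.
have irr x : lt x x = false by case/and3P: ax => /forallP/(_ x)/negbTE.
have tr x y z : lt x y -> lt y z -> lt x z.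
  by case/and3P: ax => _ /forallP/(_ x)/forallP/(_ y)/forallP/(_ z)/implyP H _ /H/implyP.
have tot x y : x != y -> lt x y || lt y x by case/and3P: ax => _ _ /forallP/(_ x)/forallP/(_ y)/implyP.
pose pos x := #|[set y | lt y x]|.
have plt u v : lt u v -> pos u < pos v.
  move=> luv; apply: proper_card; apply/properP; split.
    by apply/subsetP => y; rewrite !inE => h; apply: tr h luv.
  by exists u; rewrite !inE ?irr.
have ltE u v : lt u v = (pos u < pos v).
  apply/idP/idP; first exact: plt.
  case: (eqVneq u v) => [->|uv]; first by rewrite ltnn.
  case/orP: (tot _ _ uv) => // lvu h; have := plt _ _ lvu; lia.
have posinj : injective pos.
  move=> u v e; apply/eqP; apply/negPn/negP => uv; case/orP: (tot _ _ uv) => /plt; lia.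
have posn x : pos x < n.
  rewrite -[n]card_ord -cardsT; apply: proper_card; apply/properP; split; first exact: subsetT.
  by exists x; rewrite !inE ?irr.
exists [seq pos x | x <- enum 'I_n]; split.
  set s := [seq pos x | x <- enum 'I_n].
  have us : uniq s by rewrite map_inj_uniq ?enum_uniq.
  have sub : {subset s <= iota 0 n}.
    by move=> i /mapP[x _ ->]; rewrite mem_iota /= posn.
  have sz : size (iota 0 n) <= size s by rewrite size_map size_enum_ord size_iota.
  have [_ ei] := uniq_min_size us sub sz.
  by apply: uniq_perm => //; rewrite iota_uniq.
apply: functional_extensionality => u; apply: functional_extensionality => v.
by rewrite /lts /ltN ltE !nth_enum_map.
Qed.

Definition nMS n (b s : seq nat) : nat := \sum_(0 <= x < n | x \notin b)
   minn (\sum_(0 <= y < n | (y \in b) && ltN s y x) 1) (\sum_(0 <= y < n | (y \in b) && ltN s x y) 1).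
Definition nBC n (b s : seq nat) : nat := \sum_(0 <= x < n | (x \notin b) &&
   (has (fun y => (y \in b) && ltN s y x) (iota 0 n) && has (fun z => (z \in b) && ltN s x z) (iota 0 n))) 1.
Definition nVD n (b s : seq nat) : nat := if all (fun i => all (fun j => all (fun k =>
   (i \in b) ==> (j \in b) ==> ltN s i k ==> ltN s k j ==> (k \in b)) (iota 0 n)) (iota 0 n)) (iota 0 n)
   then 0 else 1.
Definition nMF n (b s : seq nat) : nat := \big[minn/n]_(0 <= i < n | i \in b)
   \big[minn/n]_(0 <= j < n | (j \in b) && ((i == j) || ltN s i j))
     (\sum_(0 <= z < n | (z \in b) && (ltN s z i || ltN s j z)) 1
      + \sum_(0 <= z < n | (z \notin b) && (ltN s i z && ltN s z j)) 1).

Lemma MS_conv n b s : cost_MS (sb n b) (lts n s) = nMS n b s.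
Proof.
rewrite /cost_MS /nMS big_mkord; apply: eq_big => [x|x _]; first by rewrite !inE.
rewrite -!card_ordP; congr minn; apply: eq_card => y; by rewrite !inE.
Qed.

Lemma BC_conv n b s : cost_BC (sb n b) (lts n s) = nBC n b s.
Proof.
rewrite /cost_BC /nBC -card_ordP; apply: eq_card => z; rewrite !inE; congr andb.
apply/idP/idP.
- case/existsP => a /andP[aA /existsP[c /andP[cA /andP[l1 l2]]]]; move: aA cA; rewrite !inE => aA cA.
  apply/andP; split; apply/hasP.
    by exists (nat_of_ord a); [rewrite mem_iota /= ltn_ord | rewrite aA; exact: l1].
  by exists (nat_of_ord c); [rewrite mem_iota /= ltn_ord | rewrite cA; exact: l2].
- case/andP => /hasP[i iI /andP[ib l1]] /hasP[k kI /andP[kb l2]].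
  have ilt : i < n by rewrite mem_iota in iI.
  have klt : k < n by rewrite mem_iota in kI.
  apply/existsP; exists (Ordinal ilt); rewrite inE ib /=.
  apply/existsP; exists (Ordinal klt); rewrite inE kb /=.
  by apply/andP; split.
Qed.

Lemma VD_conv n b s : cost_VD (sb n b) (lts n s) = nVD n b s.
Proof.
rewrite /cost_VD /nVD; congr (if _ then _ else _).
apply/idP/idP.
- move=> H; apply/allP => i iI; apply/allP => j jI; apply/allP => k kI.
  have ilt : i < n by rewrite mem_iota in iI.
  have jlt : j < n by rewrite mem_iota in jI.
  have klt : k < n by rewrite mem_iota in kI.
  move/forallP: H => /(_ (Ordinal ilt)) /forallP /(_ (Ordinal jlt)) /forallP /(_ (Ordinal klt)).
  by rewrite !inE.
- move=> H; apply/forallP => x; apply/forallP => y; apply/forallP => z.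
  have mI (w : 'I_n) : nat_of_ord w \in iota 0 n by rewrite mem_iota /= ltn_ord.
  move/allP: H => /(_ _ (mI x)) /allP /(_ _ (mI y)) /allP /(_ _ (mI z)).
  by rewrite !inE.
Qed.

Lemma MF_conv n b s : cost_MF (sb n b) (lts n s) = nMF n b s.
Proof.
rewrite /cost_MF /nMF card_ord.
pose G (i j : 'I_n) := #|[set z in sb n b | lts n s z i || lts n s j z]|
    + #|[set z in ~: sb n b | lts n s i z && lts n s z j]|.
rewrite -(@pair_big_dep_idem _ minn n (minnn n) _ _ (fun i => i \in sb n b)
   (fun i j => (j \in sb n b) && le_ax (lts n s) i j) G).
rewrite big_mkord; apply: eq_big => [i|i _]; first by rewrite !inE.
rewrite big_mkord; apply: eq_big => [j|j _]; first by rewrite !inE.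
rewrite /G -!card_ordP; congr addn; apply: eq_card => y; by rewrite !inE.
Qed.

Lemma example (f : forall C : finType, cost C) (natf : nat -> seq nat -> seq nat -> nat)
  (conv : forall b s, f _ (sb 5 b) (lts 5 s) = natf 5 b s) (bs : seq (seq nat)) (s0 bA : seq nat) :
  perm_eq s0 (iota 0 5) ->
  all (fun s => \sum_(b <- bs) natf 5 b s0 <= \sum_(b <- bs) natf 5 b s) (permutations (iota 0 5)) ->
  all (fun b => has (fun i => i \in b) (iota 0 5)) bs ->
  all (fun b => (0 \in b) == (1 \in b)) bs ->
  (ltN s0 0 2 && ltN s0 2 1) || (ltN s0 1 2 && ltN s0 2 0) ->
  bA \in bs -> 0 \in bA -> 1 \in bA -> 2 \notin bA ->
  exists (C : finType) (P : seq {set C}) (a a' : C) (lt : rel C) (x : C) (A : {set C}),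
       [/\ is_profile P, clones P a a', in_rule (f C) P lt, strictly_between lt a a' x &
           [/\ A \in P, a \in A, a' \in A & x \notin A]].
Proof.
move=> ps hopt hne hcl hbet bAin h0 h1 h2.
have tot s : total_cost (f _) (map (sb 5) bs) (lts 5 s) = \sum_(b <- bs) natf 5 b s.
  by rewrite /total_cost big_map; apply: eq_bigr => b _; apply: conv.
exists 'I_5, (map (sb 5) bs), (@Ordinal 5 0 isT), (@Ordinal 5 1 isT), (lts 5 s0),
  (@Ordinal 5 2 isT), (sb 5 bA); split.
- rewrite /is_profile all_map; apply/allP => b bb /=.
  move/allP: hne => /(_ b bb) /hasP [i iI ib].
  have ilt : i < 5 by rewrite mem_iota in iI.
  by apply/set0Pn; exists (Ordinal ilt); rewrite inE.
- rewrite /clones all_map; apply/allP => b bb /=; rewrite !inE; exact: (allP hcl b bb).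
- split; first exact: lts_axis.
  move=> lt' /axis_lts [s' [ps' ->]]; rewrite !tot.
  by apply: (allP hopt s'); rewrite mem_permutations.
- exact: hbet.
- by split; rewrite ?inE //; apply: map_f.
Qed.

Lemma part2 : forall f : forall C : finType, cost C,
     f = @cost_VD \/ f = @cost_MF \/ f = @cost_BC \/ f = @cost_MS ->
     exists (C : finType) (P : seq {set C}) (a a' : C) (lt : rel C)
            (x : C) (A : {set C}),
       [/\ is_profile P, clones P a a', in_rule (f C) P lt,
           strictly_between lt a a' x &
           [/\ A \in P, a \in A, a' \in A & x \notin A]].
Proof.
move=> f [->|[->|[->|->]]].
- apply: (@example (@cost_VD) nVD (VD_conv 5) [:: [:: 0; 1; 3]; [:: 2; 3]; [:: 3; 4]] [:: 0; 4; 1; 2; 3] [:: 0; 1; 3]) => //.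
  rewrite /nVD !unlock; vm_compute; reflexivity.
- apply: (@example (@cost_MF) nMF (MF_conv 5) [:: [:: 2; 3]; [:: 2; 4]; [:: 0; 1; 3; 4]] [:: 0; 4; 2; 1; 3] [:: 0; 1; 3; 4]) => //.
  rewrite /nMF !unlock; vm_compute; reflexivity.
- apply: (@example (@cost_BC) nBC (BC_conv 5) [:: [:: 2; 3]; [:: 2; 4]; [:: 0; 1; 3; 4]] [:: 0; 4; 2; 1; 3] [:: 0; 1; 3; 4]) => //.
  rewrite /nBC !unlock; vm_compute; reflexivity.
- apply: (@example (@cost_MS) nMS (MS_conv 5) [:: [:: 0; 1; 2]; [:: 0; 1; 3; 4]; [:: 2; 3; 4]] [:: 0; 2; 1; 3; 4] [:: 0; 1; 3; 4]) => //.
  rewrite /nMS !unlock; vm_compute; reflexivity.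
Qed.

Theorem mainTheorem9 :
  (forall (C : finType) (P : seq {set C}) (a a' : C),
     is_profile P -> clones P a a' ->
     forall lt : rel C, in_rule (@cost_FT C) P lt ->
     forall x : C, strictly_between lt a a' x ->
     forall A : {set C}, A \in P -> a \in A -> a' \in A -> x \in A)
  /\
  (forall f : forall C : finType, cost C,
     f = @cost_VD \/ f = @cost_MF \/ f = @cost_BC \/ f = @cost_MS ->
     exists (C : finType) (P : seq {set C}) (a a' : C) (lt : rel C)
            (x : C) (A : {set C}),
       [/\ is_profile P, clones P a a', in_rule (f C) P lt,
           strictly_between lt a a' x &
           [/\ A \in P, a \in A, a' \in A & x \notin A]]).
Proof.
split; last exact: part2.
move=> C P a a' _ cl lt ru x /orP[/andP[h1 h2]|/andP[h1 h2]] A AP aA a'A.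
- exact: part1 cl ru h1 h2 AP aA.
- have cl' : clones P a' a.
    by apply/allP => B BP; rewrite eq_sym; exact: (allP cl B BP).
  exact: part1 cl' ru h1 h2 AP a'A.
Qed.
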